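(* Let $k\ge1$ and $0<\alpha<\alpha_1<\alpha_2<\dots<\alpha_k<1$. For the asymmetric walk with fixed $q<p$, $$\lim_{N\to\infty}P_{[\alpha N]}\Big(\bigcap_{i=1}^k\{G([\alpha_iN])\equiv1\ (\mathrm{mod}\ 2)\}\Big)=\frac{1}{(2-(p-q))^k}.$$ Consequently, by inclusion–exclusion, the parities of $G([\alpha_1N]),\dots,G([\alpha_kN])$ converge jointly in distribution to i.i.d. Bernoulli random variables that equal ''odd'' with probability $(2-(p-q))^{-1}$.
   Context: Let $\mathcal T_N=\{0,\dots,N\}$ and let $(X_n)$ be a nearest-neighbour random walk on $\mathcal T_N$ stepping right with probability $p$ and left with probability $q=1-p$, where $0<q<p$ are fixed, independently at each step, and stopped the first time it is at $0$ or $N$. $P_x$ denotes the law with $X_0=x$. $T_a=\inf\{n\ge1:X_n=a\}$, $\tau_N=T_0\wedge T_N$, and $G(y)=\sum_{k=0}^{\tau_N}\mathbf 1\{X_k=y\}$ is the number of visits to $y$ before exit. $[\cdot]$ is the integer part. *)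

(* Defs.v *)
From Stdlib Require Import Reals ZArith List Bool.
Import ListNotations.
Open Scope R_scope.

(* A trajectory of the walk is given by its sequence of steps:
   true = step right (+1, prob. p), false = step left (-1, prob. q = 1-p). *)

Definition step (z : Z) (b : bool) : Z := if b then (z + 1)%Z else (z - 1)%Z.

Fixpoint positions (z : Z) (s : list bool) : list Z :=
  z :: match s with
       | nil => nil
       | b :: s' => positions (step z b) s'
       end.

Fixpoint all_paths (L : nat) : list (list bool) :=
  match L with
  | O => [@nil bool]
  | S L' => map (cons true) (all_paths L') ++ map (cons false) (all_paths L')
  end.

Definition weight (p : R) (s : list bool) : R :=
  fold_right (fun (b : bool) (acc : R) => ((if b then p else 1 - p) * acc)%R) 1%R s.

Definition interior (N : nat) (z : Z) : bool :=
  (0 <? z)%Z && (z <? Z.of_nat N)%Z.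

Definition boundary (N : nat) (z : Z) : bool :=
  (z =? 0)%Z || (z =? Z.of_nat N)%Z.

(* the walk started at x with steps s has tau_N = length s, i.e. X_1..X_{L-1}
   lie in (0,N) and X_L in {0,N}, with L >= 1 *)
Definition exits_at (N : nat) (x : Z) (s : list bool) : bool :=
  match tl (positions x s) with
  | nil => false
  | ps => forallb (interior N) (removelast ps) && boundary N (last ps 0%Z)
  end.

(* G(y) = number of k in {0,..,tau_N} with X_k = y *)
Definition visits (y : Z) (ps : list Z) : nat := count_occ Z.eq_dec ps y.

Definition all_odd (ys : list Z) (ps : list Z) : bool :=
  forallb (fun y => Nat.odd (visits y ps)) ys.

(* P_x( event and tau_N = L ) *)
Definition walk_mass (p : R) (N : nat) (x : Z) (ys : list Z) (L : nat) : R :=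
  fold_right Rplus 0
    (map (fun s => if exits_at N x s && all_odd ys (positions x s)
                   then weight p s else 0) (all_paths L)).

(* Main.v *)
Require Import Defs.
From Stdlib Require Import Reals ZArith List Bool Lia Lra.
Import ListNotations.
Import Defs.
Open Scope R_scope.

Definition sumR (l : list R) : R := fold_right Rplus 0 l.

Lemma sumR_app l1 l2 : sumR (l1 ++ l2) = sumR l1 + sumR l2.
Proof. induction l1; simpl; [ring| rewrite IHl1; ring]. Qed.

Lemma sumR_map_ext {A} (f g : A -> R) l : (forall a, f a = g a) -> sumR (map f l) = sumR (map g l).
Proof. intros H; induction l; simpl; auto. rewrite H, IHl; auto. Qed.

Lemma sumR_scal {A} (c : R) (f : A -> R) l : sumR (map (fun a => c * f a) l) = c * sumR (map f l).
Proof. induction l; simpl; [ring| rewrite IHl; ring]. Qed.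

Lemma sumR_plus {A} (f g : A -> R) l : sumR (map (fun a => f a + g a) l) = sumR (map f l) + sumR (map g l).
Proof. induction l; simpl; [ring| rewrite IHl; ring]. Qed.

Lemma sumR_zero {A} (l : list A) : sumR (map (fun _ => 0) l) = 0.
Proof. induction l; simpl; auto. rewrite IHl; ring. Qed.

Lemma sumR_swap {A B} (f : A -> B -> R) la lb :
  sumR (map (fun a => sumR (map (fun b => f a b) lb)) la) =
  sumR (map (fun b => sumR (map (fun a => f a b) la)) lb).
Proof.
  induction la; simpl.
  - rewrite sumR_zero; auto.
  - rewrite IHla. rewrite <- sumR_plus. auto.
Qed.

Lemma sumR_le {A} (f g : A -> R) l : (forall a, f a <= g a) -> sumR (map f l) <= sumR (map g l).
Proof. intros H; induction l; simpl; [lra|]. specialize (H a). lra. Qed.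

Lemma sumR_abs {A} (f : A -> R) l : Rabs (sumR (map f l)) <= sumR (map (fun a => Rabs (f a)) l).
Proof. induction l; simpl. rewrite Rabs_R0; lra.
  eapply Rle_trans; [apply Rabs_triang|]. lra. Qed.

Lemma sumR_paths_S (f : list bool -> R) L :
  sumR (map f (all_paths (S L))) = sumR (map (fun s => f (true :: s)) (all_paths L)) + sumR (map (fun s => f (false :: s)) (all_paths L)).
Proof. simpl. rewrite map_app, sumR_app, !map_map. auto. Qed.

Definition prodw (w : Z -> R) (ps : list Z) : R := fold_right (fun z acc => w z * acc) 1 ps.

Lemma prodw_ext w1 w2 ps : (forall z, w1 z = w2 z) -> prodw w1 ps = prodw w2 ps.
Proof. intros H; induction ps; simpl; auto. rewrite H, IHps; auto. Qed.

Lemma prodw_mul w1 w2 ps : prodw (fun z => w1 z * w2 z) ps = prodw w1 ps * prodw w2 ps.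
Proof. induction ps; simpl; [ring| rewrite IHps; ring]. Qed.

Lemma prodw_one ps : prodw (fun _ => 1) ps = 1.
Proof. induction ps; simpl; auto. rewrite IHps; ring. Qed.

Lemma prodw_abs w ps : (forall z, Rabs (w z) <= 1) -> Rabs (prodw w ps) <= 1.
Proof. intros H; induction ps; simpl. rewrite Rabs_R1; lra.
  rewrite Rabs_mult. specialize (H a). pose proof (Rabs_pos (w a)). pose proof (Rabs_pos (prodw w ps)). nra. Qed.

Definition sgn (y z : Z) : R := if Z.eq_dec z y then -1 else 1.

Lemma prodw_sgn y ps : prodw (sgn y) ps = if Nat.odd (visits y ps) then -1 else 1.
Proof.
  unfold visits. induction ps; simpl; auto.
  unfold sgn at 1. destruct (Z.eq_dec a y).
  - rewrite Nat.odd_succ, <- Nat.negb_odd. rewrite IHps. destruct (Nat.odd _); simpl; ring.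
  - rewrite IHps. ring.
Qed.

Definition wf (S : list Z) (z : Z) : R := fold_right (fun y acc => sgn y z * acc) 1 S.

Lemma prodw_wf_cons y S ps : prodw (wf (y :: S)) ps = prodw (sgn y) ps * prodw (wf S) ps.
Proof. rewrite <- prodw_mul. apply prodw_ext. intros; reflexivity. Qed.

Fixpoint terms (ys : list Z) : list (R * list Z) :=
  match ys with
  | [] => [(1, [])]
  | y :: ys' => map (fun t => (fst t / 2, snd t)) (terms ys') ++
                map (fun t => (- fst t / 2, y :: snd t)) (terms ys')
  end.

Lemma indicator_terms ys ps :
  (if all_odd ys ps then 1 else 0) = sumR (map (fun t => fst t * prodw (wf (snd t)) ps) (terms ys)).
Proof.
  induction ys as [|y ys IH]; simpl.
  - unfold wf; simpl. rewrite prodw_one. ring.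
  - rewrite map_app, sumR_app, !map_map. simpl.
    rewrite (sumR_map_ext _ (fun t => /2 * (fst t * prodw (wf (snd t)) ps))) by (intros; simpl; unfold Rdiv; ring).
    rewrite (sumR_map_ext (fun x => - fst x / 2 * prodw (wf (y :: snd x)) ps)
               (fun t => (- /2 * prodw (sgn y) ps) * (fst t * prodw (wf (snd t)) ps))).
    2:{ intros t. rewrite prodw_wf_cons. unfold Rdiv; ring. }
    rewrite !sumR_scal, <- IH, prodw_sgn.
    destruct (Nat.odd (visits y ps)), (all_odd ys ps); simpl.
    all: field.
Qed.

Definition Eprime (N : nat) (z : Z) (s : list bool) : bool :=
  match s with nil => boundary N z | cons _ _ => (interior N z && exits_at N z s)%bool end.

Lemma rl_last (f g : Z -> bool) z rest : rest <> [] ->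
  forallb f (removelast (z :: rest)) && g (last (z :: rest) 0%Z) =
  f z && (forallb f (removelast rest) && g (last rest 0%Z)).
Proof. intros H. destruct rest; [congruence|]. simpl. rewrite andb_assoc. reflexivity. Qed.

Lemma exits_cons N x b s : exits_at N x (b :: s) = Eprime N (step x b) s.
Proof.
  unfold exits_at. destruct s as [|b' s']. reflexivity.
  cbn [tl positions Eprime].
  assert (Hr : positions (step (step x b) b') s' <> []) by (destruct s'; simpl; discriminate).
  rewrite rl_last by auto. f_equal. unfold exits_at. cbn [tl positions].
  destruct (positions (step (step x b) b') s'); [congruence|]. reflexivity.
Qed.

Definition V (p : R) (N : nat) (w : Z -> R) (x : Z) (L : nat) : R :=
  sumR (map (fun s => if exits_at N x s then weight p s * prodw w (positions x s) else 0) (all_paths L)).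
Definition Vp (p : R) (N : nat) (w : Z -> R) (z : Z) (L : nat) : R :=
  sumR (map (fun s => if Eprime N z s then weight p s * prodw w (positions z s) else 0) (all_paths L)).

Lemma V_0 p N w x : V p N w x 0 = 0.
Proof. unfold V; simpl. unfold exits_at; simpl. ring. Qed.

Lemma V_S p N w x L : V p N w x (S L) = w x * (p * Vp p N w (x+1) L + (1-p) * Vp p N w (x-1) L).
Proof.
  unfold V, Vp. rewrite sumR_paths_S.
  rewrite (sumR_map_ext _ (fun s => (w x * p) * (if Eprime N (x+1) s then weight p s * prodw w (positions (x+1) s) else 0))).
  2:{ intros s. rewrite exits_cons. simpl. destruct (Eprime N (x+1) s); ring. }
  rewrite (sumR_map_ext (fun s => if exits_at N x (false :: s) then _ else _) (fun s => (w x * (1-p)) * (if Eprime N (x-1) s then weight p s * prodw w (positions (x-1) s) else 0))).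
  2:{ intros s. rewrite exits_cons. simpl. destruct (Eprime N (x-1) s); ring. }
  rewrite !sumR_scal. ring.
Qed.

Lemma Vp_0 p N w z : Vp p N w z 0 = if boundary N z then w z else 0.
Proof. unfold Vp; simpl. destruct (boundary N z); ring. Qed.

Lemma Vp_S p N w z L : Vp p N w z (S L) = if interior N z then V p N w z (S L) else 0.
Proof.
  unfold Vp, V. destruct (interior N z) eqn:E.
  - rewrite !sumR_paths_S. simpl. rewrite E. simpl. reflexivity.
  - rewrite sumR_paths_S. simpl. rewrite E. simpl. rewrite !sumR_zero. ring.
Qed.

Lemma interior_not_boundary N z : interior N z = true -> boundary N z = false.
Proof.
  unfold interior, boundary. intros H. apply andb_prop in H as [H1 H2].
  apply Z.ltb_lt in H1; apply Z.ltb_lt in H2.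
  apply orb_false_iff; split; apply Z.eqb_neq; lia.
Qed.

Lemma Vp_V p N w z L : interior N z = true -> Vp p N w z L = V p N w z L.
Proof.
  intros H. destruct L.
  - rewrite Vp_0, V_0, interior_not_boundary; auto.
  - rewrite Vp_S, H; auto.
Qed.

Lemma walk_terms p N x ys L :
  walk_mass p N x ys L = sumR (map (fun t => fst t * V p N (wf (snd t)) x L) (terms ys)).
Proof.
  unfold walk_mass, V.
  rewrite <- (sumR_map_ext (fun t => sumR (map (fun s => fst t * (if exits_at N x s then weight p s * prodw (wf (snd t)) (positions x s) else 0)) (all_paths L)))).
  2:{ intros t. rewrite sumR_scal. auto. }
  rewrite sumR_swap. fold sumR. apply sumR_map_ext. intros s.
  destruct (exits_at N x s); simpl.
  - rewrite (sumR_map_ext _ (fun t => weight p s * (fst t * prodw (wf (snd t)) (positions x s)))) by (intros; ring).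
    rewrite sumR_scal, <- indicator_terms. destruct (all_odd ys (positions x s)); ring.
  - rewrite (sumR_map_ext _ (fun _ => 0)) by (intros; ring). rewrite sumR_zero. auto.
Qed.

Lemma weight_nonneg p s : 0 <= p <= 1 -> 0 <= weight p s.
Proof. intros H; induction s; simpl; [lra|]. destruct a; apply Rmult_le_pos; lra. Qed.

Lemma Vp_abs p N w z L : 0 <= p <= 1 -> (forall z, Rabs (w z) <= 1) ->
  Rabs (Vp p N w z L) <= Vp p N (fun _ => 1) z L.
Proof.
  intros Hp Hw. unfold Vp. eapply Rle_trans; [apply sumR_abs|]. apply sumR_le. intros s.
  destruct (Eprime N z s). 2: rewrite Rabs_R0; lra.
  rewrite prodw_one, Rabs_mult, Rabs_pos_eq by (apply weight_nonneg; auto).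
  pose proof (prodw_abs w (positions z s) Hw). pose proof (weight_nonneg p s Hp). nra.
Qed.

Lemma V_abs p N w z L : 0 <= p <= 1 -> (forall z, Rabs (w z) <= 1) ->
  Rabs (V p N w z L) <= V p N (fun _ => 1) z L.
Proof.
  intros Hp Hw. unfold V. eapply Rle_trans; [apply sumR_abs|]. apply sumR_le. intros s.
  destruct (exits_at N z s). 2: rewrite Rabs_R0; lra.
  rewrite prodw_one, Rabs_mult, Rabs_pos_eq by (apply weight_nonneg; auto).
  pose proof (prodw_abs w (positions z s) Hw). pose proof (weight_nonneg p s Hp). nra.
Qed.

Lemma walk_bounds p N x ys L : 0 <= p <= 1 -> 0 <= walk_mass p N x ys L <= V p N (fun _ => 1) x L.
Proof.
  intros Hp. unfold walk_mass, V. split.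
  - change (0 <= sumR (map (fun s => if exits_at N x s && all_odd ys (positions x s) then weight p s else 0) (all_paths L))).
    rewrite <- (sumR_zero (all_paths L)) at 1. apply sumR_le. intros s.
    destruct (_ && _); [apply weight_nonneg; auto| lra].
  - change (sumR (map (fun s => if exits_at N x s && all_odd ys (positions x s) then weight p s else 0) (all_paths L)) <= V p N (fun _ => 1) x L). unfold V.
    apply sumR_le. intros s. rewrite prodw_one.
    destruct (exits_at N x s), (all_odd ys (positions x s)); simpl; try lra.
    pose proof (weight_nonneg p s Hp); lra.
Qed.

Lemma abs_le_inv x b : Rabs x <= b -> - b <= x <= b.
Proof. intros H. pose proof (Rle_abs x). pose proof (Rle_abs (-x)). rewrite Rabs_Ropp in H1. lra. Qed.

Lemma Un_cv_ext U1 U2 l : (forall n, U1 n = U2 n) -> Un_cv U1 l -> Un_cv U2 l.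
Proof. intros H Hc e He. destruct (Hc e He) as [M HM]. exists M. intros n Hn. rewrite <- H. auto. Qed.

Lemma cv_const c : Un_cv (fun _ => c) c.
Proof. intros e He. exists O. intros. unfold R_dist. rewrite Rminus_diag, Rabs_R0. auto. Qed.

Lemma cv_scal U l c : Un_cv U l -> Un_cv (fun n => c * U n) (c * l).
Proof. intros H. apply CV_mult; auto. apply cv_const. Qed.

Lemma cv_shift U l : Un_cv U l -> Un_cv (fun n => U (S n)) l.
Proof. intros H e He. destruct (H e He) as [M HM]. exists M. intros n Hn. apply HM. lia. Qed.

Lemma cv_bound U l a b : Un_cv U l -> (forall n, a <= U n <= b) -> a <= l <= b.
Proof.
  intros H Hb. split.
  - apply (Rle_cv_lim (Un := fun _ => a) (Vn := U)); [intros n; apply Hb| apply cv_const | auto].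
  - apply (Rle_cv_lim (Un := U) (Vn := fun _ => b)); [intros n; apply Hb| auto | apply cv_const].
Qed.

Lemma sum_zero n : sum_f_R0 (fun _ => 0) n = 0.
Proof. rewrite sum_cte. ring. Qed.

Lemma sum_S_decomp f n : sum_f_R0 f (S n) = f O + sum_f_R0 (fun i => f (S i)) n.
Proof. rewrite decomp_sum by lia. reflexivity. Qed.

Lemma cv_sumR {A} (l : list A) (f : A -> nat -> R) (g : A -> R) :
  (forall a, In a l -> Un_cv (f a) (g a)) ->
  Un_cv (fun n => sumR (map (fun a => f a n) l)) (sumR (map g l)).
Proof.
  induction l as [|a l IH]; intros H; simpl.
  - apply cv_const.
  - apply CV_plus. apply H; left; auto. apply IH. intros; apply H; right; auto.
Qed.

Lemma sum_sumR {A} (l : list A) (h : A -> nat -> R) n :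
  sum_f_R0 (fun L => sumR (map (fun a => h a L) l)) n = sumR (map (fun a => sum_f_R0 (h a) n) l).
Proof.
  induction l as [|a l IH]; simpl.
  - apply sum_zero.
  - rewrite sum_plus, IH. auto.
Qed.

Lemma scal_sum_l c f n : sum_f_R0 (fun i => c * f i) n = c * sum_f_R0 f n.
Proof. rewrite scal_sum. apply sum_eq. intros; ring. Qed.

Section Conv.
Variable p : R.
Hypothesis Hp : 0 <= p <= 1.
Variable N : nat.

Definition one : Z -> R := fun _ => 1.

Lemma Vp1_nonneg z L : 0 <= Vp p N one z L.
Proof. pose proof (Vp_abs p N one z L Hp). pose proof (Rabs_pos (Vp p N one z L)).
  assert (forall z, Rabs (one z) <= 1) by (intros; unfold one; rewrite Rabs_R1; lra). specialize (H H1). unfold one in *. lra. Qed.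

Lemma Tsum_le1 n : forall z, 0 <= sum_f_R0 (Vp p N one z) n <= 1.
Proof.
  induction n; intros z.
  - simpl. rewrite Vp_0. unfold one. destruct (boundary N z). all: lra.
  - rewrite sum_S_decomp. rewrite (sum_eq _ (fun i => if interior N z then p * Vp p N one (z+1) i + (1-p) * Vp p N one (z-1) i else 0)).
    2:{ intros i _. rewrite Vp_S, V_S. unfold one at 1. destruct (interior N z); ring. }
    destruct (interior N z) eqn:E.
    + rewrite sum_plus, !scal_sum_l. rewrite Vp_0, interior_not_boundary by auto.
      specialize (IHn (z+1)%Z) as H1. specialize (IHn (z-1)%Z) as H2. nra.
    + rewrite sum_zero. pose proof (Vp1_nonneg z 0). rewrite Vp_0 in *. unfold one in *. destruct (boundary N z); lra.
Qed.

Lemma V1sum_le1 x n : sum_f_R0 (V p N one x) n <= 1.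
Proof.
  destruct n. simpl. rewrite V_0. lra.
  rewrite sum_S_decomp, V_0. rewrite (sum_eq _ (fun i => p * Vp p N one (x+1) i + (1-p) * Vp p N one (x-1) i)).
  2:{ intros i _. rewrite V_S. unfold one; ring. }
  rewrite sum_plus, !scal_sum_l. pose proof (Tsum_le1 n (x+1)%Z). pose proof (Tsum_le1 n (x-1)%Z). nra.
Qed.

Lemma growing_sum f : (forall n, 0 <= f n) -> Un_growing (sum_f_R0 f).
Proof. intros H n. rewrite tech5. specialize (H (S n)). lra. Qed.

Lemma walk_conv x ys : {l | Un_cv (sum_f_R0 (walk_mass p N x ys)) l}.
Proof.
  apply growing_cv.
  - apply growing_sum. intros; apply walk_bounds; auto.
  - exists 1. intros r [i ->]. eapply Rle_trans; [|apply (V1sum_le1 x i)].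
    apply sum_Rle. intros; apply walk_bounds; auto.
Qed.

Lemma Vp_conv w (Hw : forall z, Rabs (w z) <= 1) z : {l | Un_cv (sum_f_R0 (Vp p N w z)) l}.
Proof.
  assert (T : {l | Un_cv (sum_f_R0 (Vp p N one z)) l}).
  { apply growing_cv. apply growing_sum. apply Vp1_nonneg.
    exists 1. intros r [i ->]. apply Tsum_le1. }
  destruct T as [lT HT].
  assert (D : {l | Un_cv (sum_f_R0 (fun L => Vp p N one z L - Vp p N w z L)) l}).
  { apply (Rseries_CV_comp _ (fun L => 2 * Vp p N one z L)).
    - intros n. pose proof (Vp_abs p N w z n Hp Hw). fold one in H. split.
      + pose proof (Rle_abs (Vp p N w z n)). lra.
      + pose proof (Rle_abs (- Vp p N w z n)) as H1. rewrite Rabs_Ropp in H1. lra.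
    - exists (2 * lT). eapply Un_cv_ext; [|apply cv_scal; exact HT]. intros n. simpl. rewrite scal_sum. apply sum_eq; intros; ring. }
  destruct D as [lD HD]. exists (lT - lD).
  eapply Un_cv_ext; [|apply CV_minus; [exact HT| exact HD]].
  intros n. simpl. rewrite minus_sum. ring.
Qed.

Section U.
Variable w : Z -> R.
Hypothesis Hw : forall z, Rabs (w z) <= 1.
Variable u : Z -> R.
Hypothesis Hu : forall z, Un_cv (sum_f_R0 (Vp p N w z)) (u z).

Lemma u_bound z : Rabs (u z) <= 1.
Proof.
  apply Rabs_le. apply (cv_bound _ _ _ _ (Hu z)). intros n.
  assert (Rabs (sum_f_R0 (Vp p N w z) n) <= 1).
  { eapply Rle_trans; [apply Rsum_abs|]. eapply Rle_trans; [|apply (Tsum_le1 n z)].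
    apply sum_Rle. intros; apply Vp_abs; auto. }
  apply abs_le_inv in H. lra.
Qed.

Lemma u_N : u (Z.of_nat N) = w (Z.of_nat N).
Proof.
  assert (Hb : boundary N (Z.of_nat N) = true) by (unfold boundary; rewrite Z.eqb_refl, orb_true_r; auto).
  assert (Hi : interior N (Z.of_nat N) = false).
  { unfold interior. apply andb_false_iff. right. apply Z.ltb_ge. lia. }
  apply (UL_sequence (sum_f_R0 (Vp p N w (Z.of_nat N)))); auto.
  eapply Un_cv_ext; [|apply (cv_const (w (Z.of_nat N)))]. intros n. simpl.
  induction n. simpl. rewrite Vp_0, Hb. auto.
  rewrite tech5, <- IHn, Vp_S, Hi. ring.
Qed.

Lemma u_rec z : interior N z = true -> u z = w z * (p * u (z+1)%Z + (1-p) * u (z-1)%Z).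
Proof.
  intros Hi. apply (UL_sequence (fun n => sum_f_R0 (Vp p N w z) (S n))).
  - apply cv_shift, Hu.
  - eapply Un_cv_ext; [| apply cv_scal; apply CV_plus; apply cv_scal; apply Hu].
    intros n. cbv beta. symmetry. rewrite sum_S_decomp, Vp_0, interior_not_boundary by auto.
    rewrite (sum_eq _ (fun i => w z * (p * Vp p N w (z+1) i + (1-p) * Vp p N w (z-1) i))).
    2:{ intros i _. rewrite Vp_S, Hi, V_S. auto. }
    rewrite scal_sum_l, sum_plus, !scal_sum_l. ring.
Qed.
End U.
End Conv.

Lemma pow_le1 r n : 0 <= r <= 1 -> r ^ n <= 1.
Proof. intros H. rewrite <- (pow1 n). apply pow_incr. lra. Qed.

Lemma pow_decr r n m : 0 <= r <= 1 -> (n <= m)%nat -> r ^ m <= r ^ n.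
Proof.
  intros Hr Hnm. replace m with (n + (m - n))%nat by lia. rewrite pow_add.
  pose proof (pow_le r n (proj1 Hr)). pose proof (pow_le r (m-n) (proj1 Hr)).
  pose proof (pow_le1 r (m-n) Hr). nra.
Qed.

Fixpoint chain (G : nat) (NZ : Z) (a : Z) (s : list Z) : Prop :=
  match s with
  | [] => (a + Z.of_nat G <= NZ)%Z
  | y :: s' => (a + Z.of_nat G <= y)%Z /\ chain G NZ y s'
  end.

Lemma chain_all G NZ s : forall a, chain G NZ a s -> forall z, In z s -> (a + Z.of_nat G <= z /\ z + Z.of_nat G <= NZ)%Z.
Proof.
  induction s as [|y s IH]; intros a H z Hz; [destruct Hz|]. simpl in H. destruct H as [H1 H2].
  destruct Hz as [<-|Hz].
  - split; auto. destruct s as [|y2 s]; simpl in H2; [lia|]. destruct H2 as [H3 H4].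
    pose proof (IH y (conj H3 H4) y2 (or_introl eq_refl)). lia.
  - specialize (IH y H2 z Hz). lia.
Qed.

Lemma chain_hd G NZ s a : chain G NZ a s -> (a + Z.of_nat G <= hd NZ s /\ hd NZ s <= NZ)%Z.
Proof.
  destruct s as [|y s]; simpl; intros H. lia.
  destruct H as [H1 H2]. split; auto.
  assert (Hy : In y (y :: s)) by (left; auto).
  destruct s as [|y2 s]; simpl in H2; [lia|]. destruct H2 as [H3 H4].
  pose proof (chain_all G NZ (y2 :: s) y ltac:(simpl; auto) y2 ltac:(left; auto)). lia.
Qed.

Lemma chain_mono G NZ s a a' : (a' <= a)%Z -> chain G NZ a s -> chain G NZ a' s.
Proof. destruct s; simpl; intros; try lia. destruct H0; split; auto; lia. Qed.

Section Det.
Variable p : R.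
Hypothesis Hp1 : 1 - p < p.
Hypothesis Hp2 : p < 1.
Let q := 1 - p.
Let r := q / p.
Definition mm (p : R) : R := - (p - (1-p)) / (1 + 2 * (1-p)).
Variable NZ : Z.
Variables u w : Z -> R.
Hypothesis Hrec : forall z, (0 < z < NZ)%Z -> u z = w z * (p * u (z+1)%Z + q * u (z-1)%Z).
Hypothesis Hb : forall z, (0 <= z <= NZ)%Z -> Rabs (u z) <= 1.
Hypothesis HN : u NZ = 1.

Definition ordinary z := (0 < z < NZ)%Z /\ w z = 1.
Let d z := u (z+1)%Z - u z.

Lemma r_range : 0 < r < 1.
Proof. unfold r, q. split. apply Rdiv_lt_0_compat; lra. apply Rmult_lt_reg_r with p. lra.
  unfold Rdiv. rewrite Rmult_assoc, Rinv_l by lra. lra. Qed.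

Lemma d_rec z : ordinary z -> d z = r * d (z-1)%Z.
Proof.
  intros [H1 H2]. pose proof (Hrec z H1) as E. rewrite H2 in E. unfold d, r.
  replace (z - 1 + 1)%Z with z by lia. unfold q in *. apply Rmult_eq_reg_l with p; [|lra].
  field_simplify; [|lra]. lra.
Qed.

Lemma seg_d a n : (forall j, (1 <= j <= n)%nat -> ordinary (a + Z.of_nat j)%Z) -> d (a + Z.of_nat n)%Z = r ^ n * d a.
Proof.
  induction n; intros H.
  - simpl. rewrite Z.add_0_r. ring.
  - rewrite d_rec by (apply H; lia). replace (a + Z.of_nat (S n) - 1)%Z with (a + Z.of_nat n)%Z by lia.
    rewrite IHn by (intros; apply H; lia). simpl. ring.
Qed.

Fixpoint geo (n : nat) : R := match n with O => 0 | S n => geo n + r ^ n end.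

Lemma geo_closed n : (1 - r) * geo n = 1 - r ^ n.
Proof. induction n; simpl. ring. rewrite Rmult_plus_distr_l, IHn. ring. Qed.

Lemma seg_u a n : (forall j, (1 <= j < n)%nat -> ordinary (a + Z.of_nat j)%Z) -> u (a + Z.of_nat n)%Z = u a + d a * geo n.
Proof.
  induction n; intros H.
  - simpl. rewrite Z.add_0_r. ring.
  - replace (a + Z.of_nat (S n))%Z with (a + Z.of_nat n + 1)%Z by lia.
    assert (E : u (a + Z.of_nat n + 1)%Z = u (a + Z.of_nat n)%Z + d (a + Z.of_nat n)%Z) by (unfold d; ring).
    rewrite E, seg_d by (intros; apply H; lia). rewrite IHn by (intros; apply H; lia). simpl. ring.
Qed.

Lemma d_bound z : (0 <= z)%Z -> (z + 1 <= NZ)%Z -> Rabs (d z) <= 2.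
Proof.
  intros H1 H2. unfold d. pose proof (Hb z ltac:(lia)). pose proof (Hb (z+1)%Z ltac:(lia)).
  unfold Rminus. eapply Rle_trans; [apply Rabs_triang|]. rewrite Rabs_Ropp. lra.
Qed.

Lemma site_eq y : (0 < y < NZ)%Z -> w y = -1 -> 2 * u y = - p * d y + q * d (y-1)%Z.
Proof.
  intros H1 H2. pose proof (Hrec y H1) as E. rewrite H2 in E. unfold d.
  replace (y - 1 + 1)%Z with y by lia. unfold q in *. lra.
Qed.

Definition Eloc (gL gR : nat) : R := (2 * r ^ gR + 2 * q * r ^ (gL - 1)) / (p - q).

Lemma mm_abs : Rabs (mm p) <= 1.
Proof. unfold mm. apply Rabs_le. split; apply Rmult_le_reg_r with (1 + 2 * (1-p)); try lra;
  unfold Rdiv; rewrite Rmult_assoc, Rinv_l by lra; lra. Qed.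

Lemma local_bound (a : Z) (gL gR : nat) : (1 <= gL)%nat -> (1 <= gR)%nat -> (0 <= a)%Z ->
  (a + Z.of_nat gL + Z.of_nat gR <= NZ)%Z ->
  w (a + Z.of_nat gL)%Z = -1 ->
  (forall j, (1 <= j < gL)%nat -> ordinary (a + Z.of_nat j)%Z) ->
  (forall j, (1 <= j < gR)%nat -> ordinary (a + Z.of_nat gL + Z.of_nat j)%Z) ->
  Rabs (u (a + Z.of_nat gL)%Z - mm p * u (a + Z.of_nat gL + Z.of_nat gR)%Z) <= Eloc gL gR.
Proof.
  intros HgL HgR Ha HbN Hy HoL HoR.
  set (y := (a + Z.of_nat gL)%Z) in *.
  assert (Hdl : d (y - 1)%Z = r ^ (gL - 1) * d a).
  { replace (y - 1)%Z with (a + Z.of_nat (gL - 1))%Z by (unfold y; lia). apply seg_d. intros; apply HoL; lia. }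
  assert (Hda : Rabs (d a) <= 2) by (apply d_bound; unfold y in *; lia).
  assert (Hub : u (y + Z.of_nat gR)%Z = u y + d y * geo gR) by (apply seg_u; auto).
  assert (Hs : 2 * u y = - p * d y + q * d (y-1)%Z) by (apply site_eq; unfold y in *; [lia| auto]).
  pose proof (geo_closed gR) as Hg.
  pose proof r_range as Hr.
  assert (Hrp : r * p = q) by (unfold r; field; lra).
  assert (Hg' : geo gR = p * (1 - r ^ gR) / (p - q)).
  { assert (Hpq : p - q <> 0) by (unfold q; lra).
    apply Rmult_eq_reg_r with (p - q); [|auto]. unfold Rdiv. rewrite Rmult_assoc, Rinv_l, Rmult_1_r by auto.
    rewrite <- Hg. rewrite <- Hrp. ring. }
  assert (Hdy : d y = (q * d (y-1)%Z - 2 * u y) / p) by (apply Rmult_eq_reg_l with p; [|lra]; field_simplify; lra).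
  set (t := r ^ gR) in *. set (dl := d (y-1)%Z) in *. set (uy := u y) in *.
  assert (Eid : uy - mm p * u (y + Z.of_nat gR)%Z = (- mm p * (2 * t / (p - q)) * uy) + (- mm p * (q * geo gR / p) * dl)).
  { rewrite Hub, Hdy, Hg'. unfold mm, q. field. lra. }
  rewrite Eid. unfold Eloc.
  assert (Huy : Rabs uy <= 1) by (apply Hb; unfold y in *; lia).
  pose proof mm_abs as Hm.
  assert (Ht : 0 <= t) by (apply pow_le; lra).
  assert (Hgn : 0 <= geo gR <= p / (p - q)).
  { rewrite Hg'. split. apply Rmult_le_pos. pose proof (pow_le1 r gR ltac:(lra)). fold t in H. nra. apply Rlt_le, Rinv_0_lt_compat. unfold q; lra.
    unfold Rdiv. apply Rmult_le_compat_r. apply Rlt_le, Rinv_0_lt_compat. unfold q; lra. nra. }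
  assert (Hdl2 : Rabs dl <= 2 * r ^ (gL - 1)).
  { rewrite Hdl, Rabs_mult, Rabs_pos_eq by (apply pow_le; lra). pose proof (pow_le r (gL-1) ltac:(lra)). nra. }
  eapply Rle_trans; [apply Rabs_triang|]. rewrite !Rabs_mult, !Rabs_Ropp.
  assert (Hpq : 0 < p - q) by (unfold q; lra).
  rewrite (Rabs_pos_eq (2 * t / (p - q))) by (apply Rmult_le_pos; [lra| apply Rlt_le, Rinv_0_lt_compat; lra]).
  rewrite (Rabs_pos_eq (q * geo gR / p)) by (apply Rmult_le_pos; [apply Rmult_le_pos; unfold q; lra| apply Rlt_le, Rinv_0_lt_compat; lra]).
  assert (A1 : Rabs (mm p) * (2 * t / (p - q)) * Rabs uy <= 2 * t / (p - q)).
  { assert (0 <= 2 * t / (p - q)) by (apply Rmult_le_pos; [lra| apply Rlt_le, Rinv_0_lt_compat; lra]).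
    pose proof (Rabs_pos (mm p)). pose proof (Rabs_pos uy). 
    apply Rle_trans with (1 * (2 * t / (p - q)) * 1); [|lra].
    apply Rmult_le_compat; try nra. }
  assert (A2 : Rabs (mm p) * (q * geo gR / p) * Rabs dl <= q / (p - q) * (2 * r ^ (gL - 1))).
  { assert (Q1 : q * geo gR / p <= q / (p - q)).
    { unfold Rdiv. rewrite Rmult_assoc. apply Rmult_le_compat_l. unfold q; lra.
      apply Rmult_le_reg_r with p. lra. rewrite Rmult_assoc, Rinv_l, Rmult_1_r by lra.
      replace (/ (p - q) * p) with (p / (p - q)) by (unfold Rdiv; ring). lra. }
    assert (0 <= q * geo gR / p) by (apply Rmult_le_pos; [apply Rmult_le_pos; unfold q; lra| apply Rlt_le, Rinv_0_lt_compat; lra]).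
    pose proof (Rabs_pos (mm p)). pose proof (Rabs_pos dl).
    apply Rle_trans with (1 * (q / (p - q)) * (2 * r ^ (gL - 1))); [|lra].
    apply Rmult_le_compat; try nra. }
  fold t. replace ((2 * t + 2 * q * r ^ (gL - 1)) / (p - q)) with (2 * t / (p - q) + q / (p - q) * (2 * r ^ (gL - 1))) by (field; lra).
  lra.
Qed.

Lemma Eloc_mono G gL gR : (1 <= G)%nat -> (G <= gL)%nat -> (G <= gR)%nat -> Eloc gL gR <= Eloc G G.
Proof.
  intros. unfold Eloc. pose proof r_range.
  assert (r ^ gR <= r ^ G) by (apply pow_decr; lra || lia).
  assert (r ^ (gL - 1) <= r ^ (G - 1)) by (apply pow_decr; lra || lia).
  unfold Rdiv. apply Rmult_le_compat_r. apply Rlt_le, Rinv_0_lt_compat; unfold q; lra.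
  assert (0 <= q) by (unfold q; lra). nra.
Qed.

Lemma chain_hd_le G s a : chain G NZ a s -> forall z, In z s -> (hd NZ s <= z)%Z.
Proof.
  destruct s as [|y s]; simpl; intros H z Hz; [destruct Hz|]. destruct H as [_ H].
  destruct Hz as [<-|Hz]. lia. pose proof (chain_all G NZ s y H z Hz). lia.
Qed.

Lemma chain_bound G : (1 <= G)%nat -> forall s a, (0 <= a)%Z -> chain G NZ a s ->
  (forall z, (a < z < NZ)%Z -> ~ In z s -> w z = 1) -> (forall z, In z s -> w z = -1) ->
  Rabs (u (hd NZ s) - mm p ^ length s) <= INR (length s) * Eloc G G.
Proof.
  intros HG. induction s as [|y s IH]; intros a Ha Hc Hw1 Hw2.
  - simpl. rewrite HN. replace (1-1) with 0 by ring. rewrite Rabs_R0. lra.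
  - simpl in Hc. destruct Hc as [Hay Hc].
    pose proof (chain_hd G NZ s y Hc) as [Hh1 Hh2].
    pose proof (chain_all G NZ s y Hc) as Hall.
    pose proof (chain_hd_le G s y Hc) as Hhl.
    assert (IH' : Rabs (u (hd NZ s) - mm p ^ length s) <= INR (length s) * Eloc G G).
    { apply (IH y); try lia; auto.
      - intros z Hz Hn. apply Hw1. lia. intros [E|E]; [lia| auto].
      - intros z Hz. apply Hw2. right; auto. }
    set (gL := Z.to_nat (y - a)). set (gR := Z.to_nat (hd NZ s - y)).
    assert (Ey : (a + Z.of_nat gL)%Z = y) by (unfold gL; lia).
    assert (Eb : (y + Z.of_nat gR)%Z = hd NZ s) by (unfold gR; lia).
    pose proof (local_bound a gL gR) as Hloc. rewrite Ey, Eb in Hloc.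
    assert (Hl : Rabs (u y - mm p * u (hd NZ s)) <= Eloc G G).
    { eapply Rle_trans; [apply Hloc|].
      - unfold gL; lia.
      - unfold gR; lia.
      - auto.
      - lia.
      - apply Hw2. left; auto.
      - intros j Hj. split. unfold gL in Hj; lia. apply Hw1. unfold gL in Hj; lia.
        intros [E|E]. unfold gL in Hj; lia. specialize (Hall _ E). unfold gL in Hj; lia.
      - intros j Hj. split. unfold gR in Hj; lia. apply Hw1. unfold gR in Hj; lia.
        intros [E|E]. lia. specialize (Hhl _ E). unfold gR in Hj; lia.
      - apply Eloc_mono; unfold gL, gR; lia. }
    change (hd NZ (y :: s)) with y. simpl length. rewrite S_INR.
    replace (u y - mm p ^ S (length s)) with ((u y - mm p * u (hd NZ s)) + mm p * (u (hd NZ s) - mm p ^ length s)) by (simpl; ring).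
    eapply Rle_trans; [apply Rabs_triang|]. rewrite Rabs_mult.
    pose proof mm_abs. pose proof (Rabs_pos (u (hd NZ s) - mm p ^ length s)). pose proof (Rabs_pos (mm p)).
    assert (Rabs (mm p) * Rabs (u (hd NZ s) - mm p ^ length s) <= INR (length s) * Eloc G G).
    { eapply Rle_trans; [|apply IH']. rewrite <- (Rmult_1_l (Rabs (u _ - _))) at 2. apply Rmult_le_compat_r; lra. }
    lra.
Qed.

Lemma init_bound (x : nat) (y : Z) : (1 <= x)%nat -> (Z.of_nat x <= y)%Z -> (y <= NZ)%Z ->
  (forall z, (0 < z < y)%Z -> ordinary z) ->
  Rabs (u (Z.of_nat x) - u y) <= 2 * r ^ x / (1 - r).
Proof.
  intros Hx Hxy HyN Ho. pose proof r_range as Hr.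
  set (n := Z.to_nat y).
  assert (E1 : u (0 + Z.of_nat x)%Z = u 0%Z + d 0%Z * geo x) by (apply seg_u; intros; apply Ho; lia).
  assert (E2 : u (0 + Z.of_nat n)%Z = u 0%Z + d 0%Z * geo n) by (apply seg_u; intros; apply Ho; unfold n in *; lia).
  replace (0 + Z.of_nat x)%Z with (Z.of_nat x) in E1 by lia.
  replace (0 + Z.of_nat n)%Z with y in E2 by (unfold n; lia).
  rewrite E1, E2. replace (u 0%Z + d 0%Z * geo x - (u 0%Z + d 0%Z * geo n)) with (d 0%Z * (geo x - geo n)) by ring.
  rewrite Rabs_mult. assert (Hd : Rabs (d 0%Z) <= 2) by (apply d_bound; lia).
  pose proof (geo_closed x). pose proof (geo_closed n).
  assert (Hxn : (x <= n)%nat) by (unfold n; lia).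
  pose proof (pow_decr r x n ltac:(lra) Hxn). pose proof (pow_le r n ltac:(lra)).
  assert (Hgg : Rabs (geo x - geo n) <= r ^ x / (1 - r)).
  { rewrite Rabs_minus_sym. apply Rabs_le. split.
    - apply Rmult_le_reg_l with (1 - r). lra. unfold Rdiv. field_simplify; [|lra]. 
      assert ((1 - r) * (geo n - geo x) = r ^ x - r ^ n) by lra. pose proof (pow_le r x ltac:(lra)). nra.
    - apply Rmult_le_reg_l with (1 - r). lra. replace ((1 - r) * (r ^ x / (1 - r))) with (r ^ x) by (field; lra).
      lra. }
  pose proof (Rabs_pos (geo x - geo n)). pose proof (Rabs_pos (d 0%Z)).
  unfold Rdiv in *. rewrite Rmult_assoc. apply Rmult_le_compat; lra.
Qed.
End Det.

Lemma sum_coef_pow c ys : sumR (map (fun t => fst t * c ^ length (snd t)) (terms ys)) = ((1 - c) / 2) ^ length ys.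
Proof.
  induction ys as [|y ys IH]; simpl. ring.
  rewrite map_app, sumR_app, !map_map. simpl.
  rewrite (sumR_map_ext _ (fun t => /2 * (fst t * c ^ length (snd t)))) by (intros; unfold Rdiv; ring).
  rewrite (sumR_map_ext (fun x => - fst x / 2 * (c * c ^ length (snd x))) (fun t => (- /2 * c) * (fst t * c ^ length (snd t)))) by (intros; unfold Rdiv; ring).
  rewrite !sumR_scal, IH. field.
Qed.

Lemma sum_abs_coef ys : sumR (map (fun t => Rabs (fst t)) (terms ys)) = 1.
Proof.
  induction ys as [|y ys IH]; simpl. rewrite Rabs_R1. ring.
  rewrite map_app, sumR_app, !map_map. simpl.
  rewrite (sumR_map_ext _ (fun t => /2 * Rabs (fst t))).
  2:{ intros. unfold Rdiv. rewrite Rabs_mult, Rabs_inv, (Rabs_pos_eq 2) by lra. ring. }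
  rewrite (sumR_map_ext (fun x => Rabs (- fst x / 2)) (fun t => /2 * Rabs (fst t))).
  2:{ intros. replace (Rabs (- fst a / 2)) with (Rabs (fst a * / 2)) by (rewrite <- Rabs_Ropp; f_equal; field).
        rewrite Rabs_mult, Rabs_inv, (Rabs_pos_eq 2) by lra. ring. }
  rewrite !sumR_scal, IH. field.
Qed.

Lemma terms_chain G NZ ys : forall t, In t (terms ys) -> forall a, chain G NZ a ys -> chain G NZ a (snd t) /\ (length (snd t) <= length ys)%nat.
Proof.
  induction ys as [|y ys IH]; simpl; intros t Ht a Hc.
  - destruct Ht as [<-|[]]. simpl. auto.
  - apply in_app_or in Ht. destruct Ht as [Ht|Ht]; apply in_map_iff in Ht as [t' [<- Ht']]; simpl; destruct Hc as [H1 H2].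
    + destruct (IH t' Ht' y H2) as [H3 H4]. split; [|lia]. apply (chain_mono G NZ _ y a); [lia| auto].
    + destruct (IH t' Ht' y H2) as [H3 H4]. split; [split; auto| lia].
Qed.

Lemma wf_abs S z : Rabs (wf S z) <= 1.
Proof. induction S; simpl. rewrite Rabs_R1; lra. rewrite Rabs_mult. unfold sgn.
  fold (wf S z). destruct (Z.eq_dec z a); [rewrite Rabs_left by lra|rewrite Rabs_R1]; lra. Qed.

Lemma wf_notin S z : ~ In z S -> wf S z = 1.
Proof. induction S; simpl; intros H. auto. unfold sgn. destruct (Z.eq_dec z a). exfalso; auto. rewrite IHS; [ring|]. auto. Qed.

Lemma wf_in G NZ S : (1 <= G)%nat -> forall a, chain G NZ a S -> forall z, In z S -> wf S z = -1.
Proof.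
  intros HG. induction S as [|y S IH]; simpl; intros a Hc z Hz; [destruct Hz|]. destruct Hc as [H1 H2].
  unfold sgn. destruct (Z.eq_dec z y) as [->|Hne].
  - rewrite wf_notin. ring. intros Hin. pose proof (chain_all G NZ S y H2 y Hin). lia.
  - destruct Hz as [E|E]. congruence. rewrite (IH y H2 z E). ring.
Qed.

Lemma sumR_abs_bound (l : list (R * list Z)) (g : R * list Z -> R) B :
  (forall t, In t l -> Rabs (g t) <= B) ->
  Rabs (sumR (map (fun t => fst t * g t) l)) <= sumR (map (fun t => Rabs (fst t)) l) * B.
Proof.
  induction l as [|t l IH]; simpl; intros H. rewrite Rabs_R0. lra.
  eapply Rle_trans; [apply Rabs_triang|]. rewrite Rabs_mult.
  pose proof (H t (or_introl eq_refl)). pose proof (Rabs_pos (fst t)).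
  pose proof (IH (fun t' Ht' => H t' (or_intror Ht'))). nra.
Qed.

Lemma exists_min (n : nat) (f : nat -> R) : (forall i, (i < n)%nat -> 0 < f i) -> exists d, 0 < d /\ forall i, (i < n)%nat -> d <= f i.
Proof.
  induction n; intros H. exists 1. split. lra. intros; lia.
  destruct IHn as [d [Hd Hd']]. intros; apply H; lia.
  exists (Rmin d (f n)). split. apply Rmin_glb_lt; auto. intros i Hi.
  destruct (Nat.eq_dec i n) as [->|]. apply Rmin_r. eapply Rle_trans; [apply Rmin_l| apply Hd']. lia.
Qed.

Lemma gap_int a b (G : nat) : IZR b - IZR a > INR G - 1 -> (a + Z.of_nat G <= b)%Z.
Proof.
  intros H. rewrite INR_IZR_INZ in H.
  assert (IZR (b - a - Z.of_nat G + 1) > 0) by (rewrite plus_IZR, !minus_IZR; simpl; lra).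
  apply lt_0_IZR in H0. lia.
Qed.

Lemma chain_seq G NZ (y : nat -> Z) m : forall j a,
  (m = 0%nat -> (a + Z.of_nat G <= NZ)%Z) -> ((0 < m)%nat -> (a + Z.of_nat G <= y j)%Z) ->
  (forall i, (j <= i)%nat -> (S i < j + m)%nat -> (y i + Z.of_nat G <= y (S i))%Z) ->
  ((0 < m)%nat -> (y (j + m - 1)%nat + Z.of_nat G <= NZ)%Z) ->
  chain G NZ a (map y (seq j m)).
Proof.
  induction m; intros j a H0 H1 H2 H3; simpl. auto.
  split. apply H1; lia. apply IHm.
  - intros ->. replace j with (j + 1 - 1)%nat by lia. apply H3; lia.
  - intros. apply H2; lia.
  - intros; apply H2; lia.
  - intros. replace (S j + m - 1)%nat with (j + S m - 1)%nat by lia. apply H3; lia.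
Qed.

Lemma asym (k : nat) (alpha : R) (alphas : nat -> R) :
  (1 <= k)%nat ->
  0 < alpha -> alpha < alphas 0%nat ->
  (forall i : nat, (S i < k)%nat -> alphas i < alphas (S i)) ->
  alphas (k - 1)%nat < 1 ->
  forall G : nat, exists N0, forall N, (N0 <= N)%nat ->
    (Z.of_nat G <= Int_part (alpha * INR N))%Z /\
    chain G (Z.of_nat N) (Int_part (alpha * INR N)) (map (fun i => Int_part (alphas i * INR N)) (seq 0 k)).
Proof.
  intros Hk Ha Ha0 Hinc Hlast G.
  destruct (exists_min (k-1) (fun i => alphas (S i) - alphas i)) as [d1 [Hd1 Hd1']].
  { intros i Hi. pose proof (Hinc i ltac:(lia)). lra. }
  set (d := Rmin (Rmin d1 alpha) (Rmin (alphas 0%nat - alpha) (1 - alphas (k-1)%nat))).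
  assert (Hd : 0 < d).
  { unfold d. apply Rmin_glb_lt; apply Rmin_glb_lt; lra. }
  assert (Hd_1 : d <= d1) by (unfold d; eapply Rle_trans; apply Rmin_l).
  assert (Hd_2 : d <= alpha) by (unfold d; eapply Rle_trans; [apply Rmin_l| apply Rmin_r]).
  assert (Hd_3 : d <= alphas 0%nat - alpha) by (unfold d; eapply Rle_trans; [apply Rmin_r| apply Rmin_l]).
  assert (Hd_4 : d <= 1 - alphas (k-1)%nat) by (unfold d; eapply Rle_trans; [apply Rmin_r| apply Rmin_r]).
  set (z0 := up ((INR G + 1) / d)).
  destruct (archimed ((INR G + 1) / d)) as [Hz0 _]. fold z0 in Hz0.
  assert (Hpos : 0 < (INR G + 1) / d) by (apply Rdiv_lt_0_compat; [pose proof (pos_INR G); lra| lra]).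
  assert (Hz0p : (0 <= z0)%Z) by (apply le_IZR; lra).
  exists (Z.to_nat z0). intros N HN.
  assert (HNr : INR N >= (INR G + 1) / d).
  { apply le_INR in HN. rewrite INR_IZR_INZ, Z2Nat.id in HN by auto. lra. }
  assert (HdN : d * INR N >= INR G + 1).
  { apply Rmult_ge_compat_l with (r := d) in HNr; [|lra]. replace (d * ((INR G + 1) / d)) with (INR G + 1) in HNr by (field; lra). lra. }
  pose proof (pos_INR N) as HN0.
  assert (IB : forall v, IZR (Int_part v) <= v /\ IZR (Int_part v) > v - 1).
  { intros v. destruct (base_Int_part v). lra. }
  split.
  - assert (H := gap_int 0 (Int_part (alpha * INR N)) G).
    destruct (IB (alpha * INR N)).
    assert (alpha * INR N >= d * INR N) by (apply Rmult_ge_compat_r; lra).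
    assert (0 + Z.of_nat G <= Int_part (alpha * INR N))%Z by (apply H; simpl; lra). lia.
  - apply chain_seq.
    + intros; lia.
    + intros _. apply gap_int. destruct (IB (alpha * INR N)), (IB (alphas 0%nat * INR N)).
      assert ((alphas 0%nat - alpha) * INR N >= d * INR N) by (apply Rmult_ge_compat_r; lra). nra.
    + intros i _ Hi. apply gap_int. destruct (IB (alphas i * INR N)), (IB (alphas (S i) * INR N)).
      assert (alphas (S i) - alphas i >= d) by (pose proof (Hd1' i ltac:(lia)); lra).
      assert ((alphas (S i) - alphas i) * INR N >= d * INR N) by (apply Rmult_ge_compat_r; lra). nra.
    + intros _. apply gap_int. replace (0 + k - 1)%nat with (k-1)%nat by lia.
      destruct (IB (alphas (k-1)%nat * INR N)). rewrite <- INR_IZR_INZ.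
      assert ((1 - alphas (k-1)%nat) * INR N >= d * INR N) by (apply Rmult_ge_compat_r; lra). nra.
Qed.

Lemma Eloc_le p G : 1 - p < p -> p < 1 -> (1 <= G)%nat ->
  Eloc p G G <= 4 * ((1-p)/p) ^ (G - 1) / (p - (1-p)).
Proof.
  intros H1 H2 HG. unfold Eloc. cbv zeta.
  set (r := (1-p)/p).
  assert (Hr : 0 < r < 1) by (apply (r_range p); auto).
  assert (r ^ G <= r ^ (G-1)) by (apply pow_decr; lra || lia).
  pose proof (pow_le r (G-1) ltac:(lra)).
  unfold Rdiv. apply Rmult_le_compat_r. apply Rlt_le, Rinv_0_lt_compat; lra. nra.
Qed.

Lemma term_bound p N G (x : Z) S (u : Z -> R) : 1 - p < p -> p < 1 -> (1 <= G)%nat ->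
  (Z.of_nat G <= x)%Z -> chain G (Z.of_nat N) x S ->
  (forall z, Un_cv (sum_f_R0 (Vp p N (wf S) z)) (u z)) ->
  Rabs (u x - mm p ^ length S) <= 2 * ((1-p)/p) ^ G / (1 - (1-p)/p) + INR (length S) * Eloc p G G.
Proof.
  intros Hp1 Hp2 HG Hx Hc Hu.
  assert (Hp : 0 <= p <= 1) by lra.
  set (NZ := Z.of_nat N).
  assert (Hrec : forall z, (0 < z < NZ)%Z -> u z = wf S z * (p * u (z+1)%Z + (1-p) * u (z-1)%Z)).
  { intros z Hz. apply (u_rec p N (wf S) u Hu). unfold interior. apply andb_true_iff. split; apply Z.ltb_lt; unfold NZ in Hz; lia. }
  assert (Hb : forall z, (0 <= z <= NZ)%Z -> Rabs (u z) <= 1) by (intros; apply (u_bound p Hp N (wf S) (wf_abs S) u Hu)).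
  pose proof (chain_hd G NZ S x Hc) as [Hh1 Hh2].
  pose proof (chain_all G NZ S x Hc) as Hall.
  assert (HN : u NZ = 1).
  { unfold NZ. rewrite (u_N p N (wf S) u Hu). apply wf_notin. intros Hin. specialize (Hall _ Hin). lia. }
  assert (HC := chain_bound p Hp1 Hp2 NZ u (wf S) Hrec Hb HN G HG S 0%Z ltac:(lia) (chain_mono G NZ S x 0 ltac:(lia) Hc)
     (fun z _ Hn => wf_notin S z Hn) (wf_in G NZ S HG x Hc)).
  assert (Hx1 : (1 <= Z.to_nat x)%nat) by lia.
  assert (Hx2 : (Z.of_nat (Z.to_nat x) <= hd NZ S)%Z) by lia.
  assert (HI := init_bound p Hp1 Hp2 NZ u (wf S) Hrec Hb (Z.to_nat x) (hd NZ S) Hx1 Hx2 Hh2).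
  rewrite Z2Nat.id in HI by lia.
  assert (HI' : Rabs (u x - u (hd NZ S)) <= 2 * ((1 - p) / p) ^ Z.to_nat x / (1 - (1 - p) / p)).
  { apply HI. intros z Hz. split. lia. apply wf_notin. intros Hin.
    pose proof (chain_hd_le NZ G S x Hc z Hin). lia. }
  assert (Hr : 0 < (1-p)/p < 1) by (apply (r_range p); auto).
  assert (((1-p)/p) ^ Z.to_nat x <= ((1-p)/p) ^ G) by (apply pow_decr; lra || lia).
  replace (u x - mm p ^ length S) with ((u x - u (hd NZ S)) + (u (hd NZ S) - mm p ^ length S)) by ring.
  eapply Rle_trans; [apply Rabs_triang|]. apply Rplus_le_compat; auto.
  eapply Rle_trans; [apply HI'|]. unfold Rdiv. apply Rmult_le_compat_r.
  apply Rlt_le, Rinv_0_lt_compat; lra. lra.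
Qed.

Lemma sumR_sub (l : list (R * list Z)) (f g : R * list Z -> R) :
  sumR (map (fun t => fst t * f t) l) - sumR (map (fun t => fst t * g t) l) = sumR (map (fun t => fst t * (f t - g t)) l).
Proof. induction l; simpl. ring. rewrite <- IHl. ring. Qed.

Theorem proposition4p2 (p : R) (k : nat) (alpha : R) (alphas : nat -> R) :
  1 - p < p -> p < 1 ->
  (1 <= k)%nat ->
  0 < alpha -> alpha < alphas 0%nat ->
  (forall i : nat, (S i < k)%nat -> alphas i < alphas (S i)) ->
  alphas (k - 1)%nat < 1 ->
  exists P : nat -> R,
    (forall N : nat,
       infinite_sum
         (fun L : nat =>
            walk_mass p N (Int_part (alpha * INR N))
              (map (fun i => Int_part (alphas i * INR N)) (seq 0 k)) L)
         (P N)) /\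
    Un_cv P (/ (2 - (p - (1 - p))) ^ k).
Proof.
  intros Hp1 Hp2 Hk Ha Ha0 Hinc Hlast.
  assert (Hp : 0 <= p <= 1) by lra.
  exists (fun N => proj1_sig (walk_conv p Hp N (Int_part (alpha * INR N)) (map (fun i => Int_part (alphas i * INR N)) (seq 0 k)))).
  split.
  { intros N. exact (proj2_sig (walk_conv p Hp N _ _)). }
  intros eps Heps.
  set (r := (1-p)/p).
  assert (Hr : 0 < r < 1) by (apply (r_range p); auto).
  set (K := 2 / (1 - r) + INR k * (4 / (p - (1-p)))).
  assert (HK : 0 < K).
  { unfold K. pose proof (pos_INR k). assert (0 < 2 / (1-r)) by (apply Rdiv_lt_0_compat; lra).
    assert (0 < 4 / (p - (1-p))) by (apply Rdiv_lt_0_compat; lra). nra. }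
  destruct (pow_lt_1_zero r ltac:(rewrite Rabs_pos_eq; lra) (eps / K) ltac:(apply Rdiv_lt_0_compat; lra)) as [M HM].
  set (G := S M).
  destruct (asym k alpha alphas Hk Ha Ha0 Hinc Hlast G) as [N0 HN0].
  exists N0. intros N HN. destruct (HN0 N HN) as [Hx Hc].
  set (x := Int_part (alpha * INR N)) in *.
  set (ys := map (fun i => Int_part (alphas i * INR N)) (seq 0 k)) in *.
  set (uu := fun (t : R * list Z) z => proj1_sig (Vp_conv p Hp N (wf (snd t)) (wf_abs (snd t)) z)).
  assert (Hint : interior N x = true).
  { pose proof (chain_hd G (Z.of_nat N) ys x Hc). unfold interior. apply andb_true_iff. split; apply Z.ltb_lt; unfold G in *; lia. }
  assert (HP : proj1_sig (walk_conv p Hp N x ys) = sumR (map (fun t => fst t * uu t x) (terms ys))).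
  { apply (UL_sequence (sum_f_R0 (walk_mass p N x ys))). exact (proj2_sig (walk_conv p Hp N x ys)).
    eapply Un_cv_ext; [| apply (cv_sumR (terms ys) (fun t n => fst t * sum_f_R0 (Vp p N (wf (snd t)) x) n) (fun t => fst t * uu t x))].
    - intros n. cbv beta. rewrite (sum_eq _ (fun L => sumR (map (fun t => fst t * V p N (wf (snd t)) x L) (terms ys)))) by (intros; apply walk_terms).
      rewrite sum_sumR. apply sumR_map_ext. intros t. rewrite scal_sum_l. f_equal. apply sum_eq. intros. rewrite Vp_V; auto.
    - intros t _. apply cv_scal. exact (proj2_sig (Vp_conv p Hp N (wf (snd t)) (wf_abs (snd t)) x)). }
  cbv beta. fold x ys. rewrite HP. unfold R_dist.
  assert (Ht : / (2 - (p - (1 - p))) ^ k = sumR (map (fun t => fst t * mm p ^ length (snd t)) (terms ys))).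
  { rewrite sum_coef_pow. unfold ys. rewrite length_map, length_seq. rewrite <- pow_inv. f_equal. unfold mm. field. lra. }
  rewrite Ht, sumR_sub.
  eapply Rle_lt_trans.
  { apply (sumR_abs_bound _ _ (K * r ^ M)). intros t Hin.
    destruct (terms_chain G (Z.of_nat N) ys t Hin x Hc) as [Hc' Hlen].
    eapply Rle_trans.
    { apply (term_bound p N G x (snd t) (uu t)); auto. unfold G; lia.
      intros z. exact (proj2_sig (Vp_conv p Hp N (wf (snd t)) (wf_abs (snd t)) z)). }
    fold r. pose proof (Eloc_le p G Hp1 Hp2 ltac:(unfold G; lia)) as HE. fold r in HE.
    replace (G - 1)%nat with M in HE by (unfold G; lia).
    assert (r ^ G <= r ^ M) by (apply pow_decr; lra || (unfold G; lia)).
    assert (INR (length (snd t)) <= INR k) by (apply le_INR; unfold ys in Hlen; rewrite length_map, length_seq in Hlen; auto).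
    assert (0 <= Eloc p G G).
    { unfold Eloc; cbv zeta. fold r. pose proof (pow_le r G ltac:(lra)). pose proof (pow_le r (G-1) ltac:(lra)).
      apply Rmult_le_pos; [| apply Rlt_le, Rinv_0_lt_compat; lra]. nra. }
    pose proof (pos_INR (length (snd t))). pose proof (pow_le r M ltac:(lra)).
    unfold K. 
    assert (2 * r ^ G / (1 - r) <= 2 / (1 - r) * r ^ M).
    { replace (2 / (1 - r) * r ^ M) with (2 * r ^ M / (1 - r)) by (field; lra).
      unfold Rdiv. apply Rmult_le_compat_r. apply Rlt_le, Rinv_0_lt_compat; lra. lra. }
    assert (INR (length (snd t)) * Eloc p G G <= INR k * (4 / (p - (1 - p))) * r ^ M).
    { eapply Rle_trans. apply Rmult_le_compat_l; [lra| exact HE].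
      replace (4 * r ^ M / (p - (1 - p))) with (4 / (p - (1 - p)) * r ^ M) by (field; lra).
      assert (0 <= 4 / (p - (1 - p)) * r ^ M) by (apply Rmult_le_pos; [apply Rlt_le, Rdiv_lt_0_compat; lra| lra]).
      rewrite <- Rmult_assoc. apply Rmult_le_compat_r; [lra|]. apply Rmult_le_compat_r; [apply Rlt_le, Rdiv_lt_0_compat; lra| lra]. }
    lra. }
  rewrite sum_abs_coef, Rmult_1_l.
  specialize (HM M (le_n M)). rewrite Rabs_pos_eq in HM by (apply pow_le; lra).
  apply Rmult_lt_compat_l with (r := K) in HM; [|lra].
  replace (K * (eps / K)) with eps in HM by (field; lra). lra.
Qed.
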